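(* Let $(c_1,\dots,c_m)\in\mathbb{Z}^m$ be a quiddity cycle with $m>3$. Then there are indices $j,k\in\{1,\dots,m\}$ such that: - $|j-k|>1$ and $\{j,k\}\ne\{1,m\}$, i.e. $j,k$ are not cyclically adjacent; - $|c_j|<2$ and $|c_k|<2$.
   Context: $\eta(c)=\begin{pmatrix}c&-1\\1&0\end{pmatrix}$. A quiddity cycle is $(c_1,\dots,c_m)$ with $\eta(c_1)\cdots\eta(c_m)=-I$. *)

(* Defs.v *)
From HB Require Import structures.
From mathcomp Require Import all_boot all_order all_algebra.
Set Implicit Arguments. Unset Strict Implicit. Unset Printing Implicit Defensive.
Import Order.TTheory GRing.Theory Num.Theory.
Local Open Scope ring_scope.

Definition eta (c : int) : 'M[int]_2 :=
  \matrix_(i < 2, j < 2)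
    (if (i == 0 :> nat) && (j == 0 :> nat) then c
     else if (i == 0 :> nat) then -1
     else if (j == 0 :> nat) then 1 else 0).

Definition quiddity_cycle (c : seq int) : Prop :=
  \prod_(x <- c) eta x = - 1%:M.

(* Main.v *)
Require Import Defs.
From HB Require Import structures.
From mathcomp Require Import all_boot all_order all_algebra.
From mathcomp Require Import zify.
Import Order.TTheory GRing.Theory Num.Theory.
Local Open Scope ring_scope.

Definition P (s : seq int) := \prod_(x <- s) Defs.eta x.

Lemma etaE (c : int) (i j : 'I_2) : Defs.eta c i j = (if (i == 0 :> nat) && (j == 0 :> nat) then c
     else if (i == 0 :> nat) then -1
     else if (j == 0 :> nat) then 1 else 0).
Proof. by rewrite mxE. Qed.

Lemma foo (n:nat) (x z w : int) : `|z| < `|x| -> n%:Z + 1 <= `|x| -> 2 * `|x| <= `|w| ->  `|w| - `|z| <= `|w + -1 * z| ->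
 `|x| < `|w + -1 * z| /\ (n.+1)%:Z + 1 <= `|w + -1*z|.
Proof. move=> *; split; lia. Qed.

Lemma growth s : all (fun x => 2 <= `|x|) s ->
  `|P s 1 0| < `|P s 0 0| /\ (size s)%:Z + 1 <= `|P s 0 0|.
Proof.
rewrite /P; elim: s => [|c s IH] /=.
  by rewrite big_nil !mxE /=.
case/andP=> Hc /IH [] ; rewrite big_cons -mulmxE.
set x := _ 0 0; set z := _ 1 0 => H1 H2.
rewrite !mxE !big_ord_recr !big_ord0 /= !etaE /=.
have H3 : 2 * `|x| <= `|c * x| by rewrite normrM ler_wpM2r.
have H4 : `|c * x| - `|z| <= `|c * x + -1 * z|.
  rewrite mulN1r lerBlDr. have := ler_normD (c*x - z) z. by rewrite subrK.
have -> : (widen_ord (leqnSn 1) ord_max : 'I_2) = 0 by apply/val_inj.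
have -> : (ord_max : 'I_2) = 1 by apply/val_inj.
rewrite -/x -/z.
rewrite !add0r !mul1r !mul0r !addr0. exact: foo.
Qed.

Lemma swap (A B : 'M[int]_2) : A * B = -1 -> B * A = -1.
Proof.
move=> H; have H1 : A *m (- B) = 1%:M by rewrite mulmxN mulmxE H opprK.
have := mulmx1C H1; rewrite mulNmx mulmxE => H2.
by rewrite -[B * A]opprK H2.
Qed.

Lemma qrot c k : quiddity_cycle c -> P (drop k c ++ take k c) = -1.
Proof.
rewrite /quiddity_cycle /P -{1}(cat_take_drop k c) !big_cat /= => H.
exact: swap.
Qed.

Lemma arith (t x y b : int) (n : nat) : n%:Z + 1 <= `|x| -> (0 < n)%N ->
  t * b + (x * -1 + y * 0) * 1 = -1 -> t * -1 + (x * -1 + y * 0) * 0 = -0 -> False.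
Proof.
move=> H1 H2 e1 e2. have Ht : t = 0 by lia.
move: e1; rewrite Ht mul0r. lia.
Qed.

Lemma final (u : seq int) a b : all (fun x => 2 <= `|x|) u -> (1 <= size u)%N ->
  P u * Defs.eta a * Defs.eta b = -1 -> False.
Proof.
move=> /growth [_ Hg] Hs.
rewrite -!mulmxE => H.
have e00 := congr1 (fun M : 'M[int]_2 => M 0 0) H.
have e01 := congr1 (fun M : 'M[int]_2 => M 0 1) H.
move: e00 e01 => /=. rewrite !mxE !big_ord_recr !big_ord0 /= !etaE /=.
have -> : (widen_ord (leqnSn 1) ord_max : 'I_2) = 0 by apply/val_inj.
have -> : (ord_max : 'I_2) = 1 by apply/val_inj.
rewrite !mxE !big_ord_recr !big_ord0 /= !etaE /=.
have -> : (widen_ord (leqnSn 1) ord_max : 'I_2) = 0 by apply/val_inj.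
have -> : (ord_max : 'I_2) = 1 by apply/val_inj.
rewrite !add0r; exact: arith Hg Hs.
Qed.

Lemma nth_rotk (c : seq int) k j : (j < size c)%N -> (k <= size c)%N ->
  nth 0 (drop k c ++ take k c) j =
  nth 0 c (if (j < size c - k)%N then (k + j)%N else (j - (size c - k))%N).
Proof.
move=> Hj Hk; rewrite nth_cat size_drop; case: ifP => Hjk.
  by rewrite nth_drop.
rewrite nth_take //; move/negbT: Hjk; rewrite -leqNgt; set n := size c in Hj Hk *; lia.
Qed.

Lemma key (c : seq int) k : quiddity_cycle c -> (3 < size c)%N -> (k <= size c)%N ->
  (forall j, (j < size c - 2)%N -> 2 <= `|nth 0 (drop k c ++ take k c) j|) -> False.
Proof.
move=> Hq0 Hm Hk Hb; have Hq := qrot c k Hq0.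
set s := drop k c ++ take k c in Hq Hb.
have Hs : size s = size c by rewrite /s size_cat size_drop size_take; case: ifP; lia.
have Hd : size (drop (size c - 2) s) = 2%N by rewrite size_drop Hs; lia.
move: Hq; rewrite -(cat_take_drop (size c - 2) s).
case E: (drop (size c - 2) s) Hd => [|a [|b [|? ?]]] // _.
rewrite /P big_cat !big_cons big_nil /= mulr1 mulrA => H.
apply: (@final (take (size c - 2) s) a b _ _ H).
  apply/(all_nthP 0) => j; rewrite size_take Hs.
  have -> : (size c - 2 < size c)%N by lia.
  move=> Hj; rewrite nth_take //; exact: Hb.
by rewrite size_take Hs; case: ifP; lia.
Qed.

Lemma nonadj (m j k : nat) : (3 < m)%N -> (j < m)%N -> (k < m)%N -> j <> k -> j.+1 <> k -> k.+1 <> j -> ~ (j = 0 /\ k = m.-1)%N -> ~ (k = 0 /\ j = m.-1)%N ->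
    (1 < `|(j%:Z - k%:Z)%R|)%N /\
    ~ ((j == 0%N) && (k == m.-1) || (k == 0%N) && (j == m.-1)).
Proof. move=> *; split.
 lia.
case/orP => /andP[/eqP ? /eqP ?]; subst; lia. Qed.

From Stdlib Require Import Classical.

Theorem corollary6p3 (c : seq int) :
  quiddity_cycle c -> (3 < size c)%N ->
  exists j k : nat,
    (j < size c)%N /\ (k < size c)%N /\
    (1 < `|(j%:Z - k%:Z)%R|)%N /\
    ~ ((j == 0%N) && (k == (size c).-1) || (k == 0%N) && (j == (size c).-1)) /\
    (`|nth 0%R c j| < 2)%R /\ (`|nth 0%R c k| < 2)%R.
Proof.
move=> Hq Hm.
apply: NNPP => Hn.
have H : forall j k, (j < size c)%N -> (k < size c)%N -> j <> k -> j.+1 <> k -> k.+1 <> j ->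
   ~ (j = 0 /\ k = (size c).-1)%N -> ~ (k = 0 /\ j = (size c).-1)%N ->
   `|nth 0 c j| < 2 -> `|nth 0 c k| < 2 -> False.
  move=> j k Hj Hk h1 h2 h3 h4 h5 s1 s2; apply: Hn; exists j, k.
  have [A B] := nonadj (size c) j k Hm Hj Hk h1 h2 h3 h4 h5.
  by do !split.
have [p [p' [Hp [Hp' [Hpp' Hsm]]]]] : exists p p', (p < size c)%N /\ (p' < size c)%N /\
   (p' = p.+1 \/ (p = (size c).-1 /\ p' = 0%N)) /\
   forall q, (q < size c)%N -> `|nth 0 c q| < 2 -> q = p \/ q = p'.
  case: (classic (exists i, (i < size c)%N /\ `|nth 0 c i| < 2)) => [[i [Hi Si]]|Hno]; last first.
    exists 0%N, 1%N; do !split; try lia.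
    move=> q Hq' Sq; case: Hno; by exists q.
  set i' := if i.+1 == size c then 0%N else i.+1.
  have Hi' : (i' < size c)%N /\ (i' = i.+1 \/ (i = (size c).-1 /\ i' = 0%N)).
    rewrite /i'; case: eqP => ?; lia.
  case: (boolP (`|nth 0 c i'| < 2)) => Si'.
    exists i, i'; do !split; try lia.
    move=> q Hq' Sq.
    case: (classic (q = i \/ q = i')) => // Hne.
    case: (classic (q.+1 = i \/ (i = 0%N /\ q = (size c).-1))) => Hpr.
      exfalso; apply: (H q i') => //; lia.
    exfalso; apply: (H q i) => //; lia.
  set p := if i == 0%N then (size c).-1 else i.-1.
  have Hpp : (p < size c)%N /\ (i = p.+1 \/ (p = (size c).-1 /\ i = 0%N)).
    rewrite /p; case: eqP => ?; lia.
  exists p, i; do !split; try lia.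
  move=> q Hq' Sq.
  case: (classic (q = p \/ q = i)) => // Hne.
  case: (classic (q = i')) => Hqi.
    by move: Si'; rewrite -Hqi Sq.
  exfalso; apply: (H q i) => //; lia.
have Hcase : exists k, (k <= size c)%N /\ (k = p.+2 \/ (p = (size c).-1 /\ k = 1%N)).
  case: Hpp' => [?|[? ?]]; [exists p.+2 | exists 1%N]; lia.
case: Hcase => k [Hk Hkc].
apply: (key c k Hq Hm Hk) => j Hj.
rewrite nth_rotk; [|lia|lia].
rewrite leNgt; apply/negP => Sj.
case: ifP Sj => Hjk Sj.
  have : (k + j < size c)%N by lia.
  move=> /Hsm /(_ Sj); lia.
have : (j - (size c - k) < size c)%N by lia.
move=> /Hsm /(_ Sj); move/negbT: Hjk; rewrite -leqNgt; lia.
Qed.
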